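(* Let $\mathcal{B}=\langle V,F,E\rangle$ be a self-contained finite bipartite graph and let $\mathcal{S}_F$ be the set of its minimal self-contained sets. Let $S\in\mathcal{S}_F$ and let $\mathcal{B}'$ be the subgraph of $\mathcal{B}$ induced by $V'=V\setminus\mathrm{adj}_{\mathcal{B}}(S)$ and $F'=F\setminus S$. Then (1) $\mathcal{B}'$ is self-contained, and (2) every set in $\mathcal{S}_F\setminus\{S\}$ is minimal self-contained in $\mathcal{B}'$.
   Context: $\mathcal{B}=\langle V,F,E\rangle$ is bipartite with variable vertices $V$ and constraint vertices $F$; $\mathrm{adj}_{\mathcal{B}}(X)$ is the set of vertices adjacent to some vertex of $X$. A set $F'\subseteq F$ is self-contained (in $\mathcal{B}$) if $|F'|=|\mathrm{adj}_{\mathcal{B}}(F')|$ and $|F''|\le|\mathrm{adj}_{\mathcal{B}}(F'')|$ for all $F''\subseteq F'$. $\mathcal{B}$ is self-contained if $|F|=|V|$ and $F$ is self-contained. A non-empty self-contained set is minimal self-contained if none of its non-empty strict subsets is self-contained. *)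

(* Defs.v *)
From mathcomp Require Import all_boot.
Set Implicit Arguments. Unset Strict Implicit. Unset Printing Implicit Defensive.

(* A finite bipartite graph B = <Vs, Fs, E>: variable vertices Vs : {set V},
   constraint vertices Fs : {set F}, and edges given by the relation E
   (restricted to Vs x Fs).  The whole graph is (setT, setT); induced
   subgraphs are obtained by shrinking Vs and Fs. *)
Section BG.
Variables (V F : finType) (E : F -> V -> bool).

Definition adj (Vs : {set V}) (X : {set F}) : {set V} :=
  [set v in Vs | [exists f in X, E f v]].

Definition self_contained_set (Vs : {set V}) (Fs : {set F}) (X : {set F}) : bool :=
  [&& X \subset Fs, #|X| == #|adj Vs X| &
      [forall Y : {set F}, (Y \subset X) ==> (#|Y| <= #|adj Vs Y|)]].

Definition self_contained_graph (Vs : {set V}) (Fs : {set F}) : bool :=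
  (#|Fs| == #|Vs|) && self_contained_set Vs Fs Fs.

Definition minimal_self_contained (Vs : {set V}) (Fs : {set F}) (X : {set F}) : bool :=
  [&& X != set0, self_contained_set Vs Fs X &
      [forall Y : {set F}, ((Y != set0) && (Y \proper X)) ==> ~~ self_contained_set Vs Fs Y]].
End BG.

(* Main.v *)
Require Import Defs.
From mathcomp Require Import all_boot.
From mathcomp Require Import zify.
Set Implicit Arguments. Unset Strict Implicit.

Section H.
Variables (V F : finType) (E : F -> V -> bool).
Local Notation A := (adj E [set: V]).

Lemma adjU (Y Z : {set F}) : A (Y :|: Z) = A Y :|: A Z.
Proof.
apply/setP => v; rewrite !inE /=; apply/existsP/orP.
- by case=> f /andP [/setUP [] Hf He]; [left|right]; apply/existsP; exists f; rewrite Hf He.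
- by case=> /existsP [f /andP [Hf He]]; exists f; rewrite inE Hf He ?orbT.
Qed.

Lemma adjS (Vs : {set V}) (Y Z : {set F}) : Y \subset Z -> adj E Vs Y \subset adj E Vs Z.
Proof.
move=> sYZ; apply/subsetP => v; rewrite !inE => /andP [-> /existsP [f /andP [Hf He]]].
by apply/existsP; exists f; rewrite He (subsetP sYZ).
Qed.

Lemma adjC (S Y : {set F}) : adj E (~: A S) Y = A Y :\: A S.
Proof. by apply/setP => v; rewrite !inE andbC. Qed.

Lemma capbound (T S : {set F}) :
  (forall Y : {set F}, #|Y| <= #|A Y|) -> #|T| = #|A T| -> #|S| = #|A S| ->
  #|A T :&: A S| <= #|T :&: S|.
Proof.
move=> H hT hS.
have h1 := cardsUI (A T) (A S).
have h2 := cardsUI T S.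
have h3 := H (T :|: S); rewrite adjU in h3.
lia.
Qed.

End H.

Theorem lemma33 (V F : finType) (E : F -> V -> bool) (S : {set F}) :
  self_contained_graph E [set: V] [set: F] ->
  minimal_self_contained E [set: V] [set: F] S ->
  self_contained_graph E (~: adj E [set: V] S) (~: S) /\
  (forall T : {set F}, minimal_self_contained E [set: V] [set: F] T -> T != S ->
     minimal_self_contained E (~: adj E [set: V] S) (~: S) T).
Proof.
move=> /andP [/eqP hFV /and3P [_ /eqP hF /forallP H0]].
have H : forall Y : {set F}, #|Y| <= #|adj E [set: V] Y|.
  by move=> Y; have := H0 Y; rewrite subsetT.
move=> /and3P [S0 /and3P [_ /eqP hS _] /forallP Smin].
have HB : forall Y : {set F}, Y \subset ~: S ->
    #|Y| <= #|adj E (~: adj E [set: V] S) Y|.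
  move=> Y YS; rewrite adjC.
  have h1 := H (Y :|: S); rewrite adjU in h1.
  have h2 := cardsUI Y S.
  have h3 := cardsUI (adj E [set: V] Y) (adj E [set: V] S).
  have h4 := cardsD (adj E [set: V] Y) (adj E [set: V] S).
  have : Y :&: S = set0 by apply/setP=> x; rewrite !inE; apply/negP=> /andP[/(subsetP YS)]; rewrite inE => /negPf ->.
  move=> e; rewrite e cards0 in h2.
  have h5 : #|adj E [set: V] Y :&: adj E [set: V] S| <= #|adj E [set: V] S| by apply: subset_leq_card; apply: subsetIr.
  lia.
split.
  have hc : #|~: S| = #|~: adj E [set: V] S|.
    have := cardsC S; have := cardsC (adj E [set: V] S).
    rewrite !cardsT in hFV *. lia.
  apply/andP; split; first by apply/eqP.
  apply/and3P; split => //.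
  - have h1 := HB (~: S) (subxx _).
    have h2 : #|adj E (~: adj E [set: V] S) (~: S)| <= #|~: adj E [set: V] S|.
      by apply: subset_leq_card; apply/subsetP => v; rewrite inE => /andP [].
    apply/eqP; lia.
  - by apply/forallP => Y; apply/implyP => YS; apply: HB.
move=> T /and3P [T0 /and3P [_ /eqP hT _] /forallP Tmin] TS.
have hTS := capbound H hT hS.
(* T :&: S is self-contained, so empty *)
have TSe : T :&: S = set0.
  apply/eqP; apply/negPn/negP => ne.
  have hI : #|T :&: S| <= #|adj E [set: V] (T :&: S)| := H _.
  have hI2 : #|adj E [set: V] (T :&: S)| <= #|adj E [set: V] T :&: adj E [set: V] S|.
    apply: subset_leq_card; apply/subsetP => v vI.
    by rewrite inE (subsetP (adjS E [set: V] (subsetIl T S)) v vI) (subsetP (adjS E [set: V] (subsetIr T S)) v vI).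
  have scI : self_contained_set E [set: V] [set: F] (T :&: S).
    apply/and3P; split; [exact: subsetT | apply/eqP; lia |].
    by apply/forallP => Y; apply/implyP => _; apply: H.
  case: (boolP (T :&: S \proper S)) => pS.
    by have := Smin (T :&: S); rewrite ne pS scI.
  have eS : T :&: S = S.
    by apply/eqP; rewrite eqEproper subsetIr pS.
  have sST : S \subset T by rewrite -eS subsetIl.
  case: (boolP (S \proper T)) => pT.
    have := Tmin S; rewrite S0 pT /=.
    by apply/negP/negPn; apply/and3P; split; [exact: subsetT | apply/eqP | apply/forallP => Y; apply/implyP => _; apply: H].
  have : S == T by rewrite eqEproper sST /= pT.
  by rewrite eq_sym (negPf TS).
rewrite TSe cards0 leqn0 cards_eq0 in hTS.
have adjE : forall Y : {set F}, Y \subset T -> adj E (~: adj E [set: V] S) Y = adj E [set: V] Y.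
  move=> Y YT; rewrite adjC; apply/setP => v; rewrite inE.
  case vS: (v \in adj E [set: V] S); rewrite /= ?andbT //.
  apply/esym/negbTE/negP => vY.
  have : v \in adj E [set: V] T :&: adj E [set: V] S by rewrite inE vS (subsetP (adjS E [set: V] YT)).
  by rewrite (eqP hTS) inE.
have TsS : T \subset ~: S.
  apply/subsetP => x xT; rewrite inE; apply/negP => xS.
  have : x \in T :&: S by rewrite inE xT xS.
  by rewrite TSe inE.
have scE : forall Y : {set F}, Y \subset T ->
    self_contained_set E (~: adj E [set: V] S) (~: S) Y = self_contained_set E [set: V] [set: F] Y.
  move=> Y YT; rewrite /self_contained_set adjE // subsetT (subset_trans YT TsS) /=.
  congr andb; apply: eq_forallb => Z.
  case: (boolP (Z \subset Y)) => //= ZY.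
  by rewrite adjE // (subset_trans ZY YT).
apply/and3P; split => //; first by rewrite scE //; apply/and3P; split; [exact: subsetT | apply/eqP | apply/forallP => Y; apply/implyP => _; apply: H].
apply/forallP => Y; apply/implyP => /andP [Y0 YT].
rewrite scE; last exact: proper_sub YT.
by have := Tmin Y; rewrite Y0 YT.
Qed.
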